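(* Let $d\ge 2$ and let $\rho$ be any density matrix on $\mathbb{C}^d$. Then $$\frac{C_{l_1}(\rho)^2}{(d-1)^2} + M_l(\rho) \le 1 .$$
   Context: Fix the computational (reference) basis $\{|i\rangle\}_{i=1}^d$ of $\mathbb{C}^d$ and write $\rho_{ij}=\langle i|\rho|j\rangle$. The $l_1$ norm of coherence is $C_{l_1}(\rho)=\sum_{i\neq j}|\rho_{ij}|$. The mixedness (normalized linear entropy) is $M_l(\rho)=\frac{d}{d-1}\left(1-\mathrm{Tr}\,\rho^2\right)$. *)

(* Defs.v *)
(* Complex numbers are modelled by an arbitrary
   numClosedFieldType C (e.g. algC, or the genuine complex numbers). *)
From HB Require Import structures.
From mathcomp Require Import all_boot all_order all_algebra.
Set Implicit Arguments. Unset Strict Implicit. Unset Printing Implicit Defensive.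
Import Order.TTheory GRing.Theory Num.Theory.
Local Open Scope ring_scope.

Definition adjmx {C : numClosedFieldType} {m n : nat} (A : 'M[C]_(m, n)) : 'M[C]_(n, m) :=
  (map_mx Num.conj A)^T.

Definition density_matrix {C : numClosedFieldType} {d : nat} (rho : 'M[C]_d) : Prop :=
  [/\ adjmx rho = rho,
      (forall v : 'cV[C]_d, 0 <= (adjmx v *m rho *m v) ord0 ord0)
    & \tr rho = 1].

Definition coh_l1 {C : numClosedFieldType} {d : nat} (rho : 'M[C]_d) : C :=
  \sum_(i < d) \sum_(j < d | i != j) `|rho i j|.

Definition mixedness {C : numClosedFieldType} {d : nat} (rho : 'M[C]_d) : C :=
  (d%:R / (d%:R - 1)) * (1 - \tr (rho *m rho)).

(* Main.v *)
Require Import Defs.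
From HB Require Import structures.
From mathcomp Require Import all_boot all_order all_algebra.
From mathcomp Require Import ring.
Import Order.TTheory GRing.Theory Num.Theory.
Local Open Scope ring_scope.

Lemma cs (R : numDomainType) (I : finType) (P : pred I) (x : I -> R)
  (hx : forall i, 0 <= x i) (hn : 0 < \sum_(i | P i) (1 : R)) :
  (\sum_(i | P i) x i) ^+ 2 <= (\sum_(i | P i) (1 : R)) * \sum_(i | P i) x i ^+ 2.
Proof.
set n := \sum_(i | P i) (1 : R) in hn *.
set S := \sum_(i | P i) x i.
set T := \sum_(i | P i) x i ^+ 2.
have h0 : 0 <= \sum_(i | P i) (n * x i - S) ^+ 2.
  apply: sumr_ge0 => i _.
  have r : n * x i - S \is Num.real.
    apply: realB; apply: ger0_real; first by apply: mulr_ge0 => //; exact: ltW.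
    by apply: sumr_ge0 => j _.
  by rewrite -real_normK // exprn_ge0.
rewrite (eq_bigr (fun i => n^+2 * x i^+2 - (2*n*S) * x i + S^+2 * 1)) in h0;
  last by move=> i _; ring.
rewrite big_split sumrB /= -!mulr_sumr -/S -/n -/T in h0.
have e : n ^+ 2 * T - 2 * n * S * S + S ^+ 2 * n
   = n * (n * T - S ^+ 2) by ring.
rewrite e pmulr_rge0 // subr_ge0 in h0.
exact: h0.
Qed.
Theorem theorem1 (C : numClosedFieldType) (d : nat) (hd : (2 <= d)%N)
  (rho : 'M[C]_d) (hrho : density_matrix rho) :
  coh_l1 rho ^+ 2 / (d%:R - 1) ^+ 2 + mixedness rho <= 1.
Proof.
case: hrho => hH _ htr.
have hc : forall i j, (rho i j)^* = rho j i.
  by move=> i j; rewrite -{2}hH /adjmx !mxE.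
set e : C := d%:R.
set k : C := e - 1.
have he : 2%:R <= e by rewrite /e ler_nat.
have hk : 0 < k by rewrite /k subr_gt0 (lt_le_trans _ he) // ltr1n.
set D := \sum_(i < d) `|rho i i| ^+ 2.
set O := \sum_(i < d) \sum_(j < d | i != j) `|rho i j| ^+ 2.
have hT : \tr (rho *m rho) = D + O.
  rewrite /D /O -big_split /mxtrace; apply: eq_bigr => i _.
  rewrite mxE (bigD1 i) //=; congr (_ + _).
    by rewrite normCK hc.
  rewrite (eq_bigl (fun j => i != j)); last by move=> j; rewrite eq_sym.
  by apply: eq_bigr => j _; rewrite normCK hc.
have hsum1 : \sum_(i < d) (1 : C) = e by rewrite sumr_const card_ord.
have hin : forall i : 'I_d, \sum_(j < d | i != j) (1 : C) = k.
  move=> i; have := hsum1; rewrite (bigD1 i) //= => h.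
  rewrite /k -h addrC addrK; apply: eq_bigl => j; by rewrite eq_sym.
have hcnt : \sum_(i < d) \sum_(j < d | i != j) (1 : C) = e * k.
  by rewrite -hsum1 mulr_suml; apply: eq_bigr => i0 _; rewrite mul1r hin.
have hcs : coh_l1 rho ^+ 2 <= e * k * O.
  rewrite -hcnt /coh_l1 /O !pair_big_dep; apply: cs => //.
  by rewrite -(pair_big_dep xpredT (fun i j => i != j) (fun _ _ => (1:C))) hcnt mulr_gt0 // (lt_le_trans _ he) // ltr0n.
have hD : 1 <= e * D.
  have h1 : 1 <= \sum_(i < d) `|rho i i|.
    rewrite -(normr1 C) -htr /mxtrace; exact: ler_norm_sum.
  have h2 := @cs C _ (fun _ : 'I_d => true) (fun i => `|rho i i|)
       (fun i => normr_ge0 _).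
  rewrite hsum1 in h2; apply: le_trans (h2 _); last first.
    by rewrite (lt_le_trans _ he) // ltr0n.
  by rewrite expr2 -(mulr1 1) ler_pM.
rewrite /mixedness hT -/e -/k.
apply: (le_trans (y := e * O / k + e / k * (1 - (D + O)))).
  rewrite lerD2r ler_pdivrMr ?exprn_gt0 //.
  have -> : e * O / k * k ^+ 2 = e * k * O.
    by field; rewrite gt_eqF.
  exact: hcs.
have -> : e * O / k + e / k * (1 - (D + O)) = (e - e * D) / k.
  by rewrite mulrBr mulr1 mulrDr; field; rewrite gt_eqF.
by rewrite ler_pdivrMr // mul1r /k lerB.
Qed.
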